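(* Let $\|\cdot\|$ be any submultiplicative matrix norm on the algebra $M_n(\mathbb C)$ of complex $n\times n$ matrices. For $C\ge1$ and $N\in\mathbb N$ put $r^N_C(x)=C\cdot\max\{\|x\|,\|x^{-1}\|\}^N$, $x\in\mathrm{GL}_n(\mathbb C)$. Then the functions $r^N_C$ majorize all semicharacters on $\mathrm{GL}_n(\mathbb C)$: for every semicharacter $f$ on $\mathrm{GL}_n(\mathbb C)$ there exist $C\ge1$ and $N\in\mathbb N$ with $f(x)\le r^N_C(x)$ for all $x\in\mathrm{GL}_n(\mathbb C)$.
   Context: A semicharacter on a complex Lie group $G$ is a locally bounded function $f:G\to[1,+\infty)$ satisfying $f(xy)\le f(x)f(y)$ for all $x,y\in G$. A matrix norm $\|\cdot\|$ is submultiplicative if $\|xy\|\le\|x\|\,\|y\|$. *)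

(* Defs.v *)
From HB Require Import structures.
From mathcomp Require Import all_boot all_order all_algebra.
From mathcomp Require Import all_classical all_reals all_analysis.
From mathcomp Require Export complex.
Export Order.TTheory GRing.Theory Num.Theory.

Set Implicit Arguments.
Unset Strict Implicit.
Unset Printing Implicit Defensive.

Local Open Scope ring_scope.

(* Equip C = R[i] with its usual (modulus) metric topology, as analysis does
   for generic numFieldTypes via R^o. *)
HB.instance Definition _ (R : rcfType) := PseudoPointedMetric.copy R[i] R[i]^o.

(* The topology on
   R[i] is the one of its modulus (numFieldTopology), and 'M[R[i]]_n carries the
   product (entrywise) topology from matrix_topology: the usual topology of
   M_n(C) = C^(n*n). *)

Definition submult_mxnorm (R : realType) (n : nat) (nm : 'M[R[i]]_n -> R) : Prop :=
  [/\ (forall A, 0 <= nm A),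
      (forall A, nm A = 0 -> A = 0),
      (forall (c : R[i]) A, nm (c *: A) = Normc.normc c * nm A),
      (forall A B, nm (A + B) <= nm A + nm B)
    & (forall A B, nm (A *m B) <= nm A * nm B)].

(* A semicharacter on GL_n(C) = { x : 'M_n | x \in unitmx }, given as a function
   on M_n(C) whose values outside GL_n(C) are irrelevant. *)
Definition semicharacter_GL (R : realType) (n : nat) (f : 'M[R[i]]_n -> R) : Prop :=
  [/\ (forall x, x \in unitmx -> 1 <= f x),
      (forall x y, x \in unitmx -> y \in unitmx -> f (x *m y) <= f x * f y)
    &
      (forall x : 'M[R[i]]_n, x \in unitmx -> exists M : R,
          \forall y \near x, y \in unitmx -> f y <= M)].

Definition rNC (R : realType) (n : nat) (nm : 'M[R[i]]_n -> R) (C : R) (N : nat)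
  (x : 'M[R[i]]_n) : R :=
  C * (Num.max (nm x) (nm (invmx x))) ^+ N.

(* Main.v *)
Require Import Defs.
From HB Require Import structures.
From mathcomp Require Import all_boot all_order all_algebra.
From mathcomp Require Import all_classical all_reals all_analysis.
From mathcomp Require Import complex.
From mathcomp Require Import spectral.
From mathcomp Require Import ring lra.
Import Order.TTheory GRing.Theory Num.Theory.
Local Open Scope ring_scope.

Module Aux.
Set Implicit Arguments.
Unset Strict Implicit.

Section Scalars.
Variable R : realType.
Local Notation nc := (@Normc.normc R).
Local Notation RC := (real_complex R).

Lemma nc_real (a : R) : nc (RC a) = `|a|.
Proof. by rewrite /= expr0n /= addr0 sqrtr_sqr. Qed.

Lemma normC_nc (z : R[i]) : `|z| = RC (nc z).
Proof. by []. Qed.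

Lemma nc_ge0 (z : R[i]) : 0 <= nc z.
Proof. by case: z => a b; rewrite /= sqrtr_ge0. Qed.

Lemma nc_sq (z : R[i]) : nc z ^+ 2 = complex.Re z ^+ 2 + complex.Im z ^+ 2.
Proof. by case: z => a b /=; rewrite sqr_sqrtr // addr_ge0 // sqr_ge0. Qed.

Lemma ncM (x y : R[i]) : nc (x * y) = nc x * nc y.
Proof. exact: Normc.normcM. Qed.

Lemma sqrtc_unit (z : R[i]) : nc z = 1 -> nc (sqrtc z) = 1.
Proof.
move=> h; have := sqr_sqrtc z => /(congr1 nc); rewrite expr2 ncM h -expr2.
move=> h2; have := nc_ge0 (sqrtc z); move: h2; set w := nc _ => h2 hw.
nra.
Qed.

Lemma sqrtc_Re (z : R[i]) : nc z = 1 ->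
  complex.Re (sqrtc z) = Num.sqrt ((1 + complex.Re z) / 2%:R).
Proof. by case: z => a b /= ->. Qed.

Lemma Re_bound (z : R[i]) : nc z = 1 -> -1 <= complex.Re z <= 1.
Proof.
move=> h; have := nc_sq z; rewrite h expr1n => h2.
have h3 : complex.Re z ^+ 2 <= 1 by rewrite h2 lerDl sqr_ge0.
have : `|complex.Re z| <= 1.
  by rewrite -(expr_le1 (n:=2)) // real_normK ?num_real.
by rewrite ler_norml.
Qed.

Lemma sqrtc_Re_step (z : R[i]) : nc z = 1 ->
  1 - complex.Re (sqrtc z) <= (1 - complex.Re z) / 2%:R.
Proof.
move=> h; rewrite sqrtc_Re //; have /andP[h1 h2] := Re_bound h.
set a := complex.Re z in h1 h2 *.
set y := (1 + a) / 2%:R.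
have y0 : 0 <= y by rewrite /y; lra.
have y1 : y <= 1 by rewrite /y; lra.
have : y <= Num.sqrt y.
  rewrite -{1}(ger0_norm y0) -(sqrtr_sqr y); apply: ler_wsqrtr.
  by rewrite expr2; nra.
rewrite /y; lra.
Qed.

Lemma nc_sub1_sq (z : R[i]) : nc z = 1 -> nc (z - 1) ^+ 2 = 2%:R * (1 - complex.Re z).
Proof.
move=> h; have := nc_sq z; rewrite h expr1n => h2.
rewrite nc_sq; case: z h h2 => a b /= _ h2.
rewrite subr0; nra.
Qed.


Lemma iter_sqrtc k (z : R[i]) : nc z = 1 ->
  [/\ nc (iter k (@sqrtc R) z) = 1,
      1 - complex.Re (iter k (@sqrtc R) z) <= 2%:R / 2%:R ^+ k
    & (iter k (@sqrtc R) z) ^+ (2 ^ k) = z].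
Proof.
move=> hz; elim: k => [|k [h1 h2 h3]].
  rewrite /= expr0 divr1 expr1; split => //.
  by have /andP[] := Re_bound hz; lra.
rewrite iterS; split; first exact: sqrtc_unit.
  apply: (le_trans (sqrtc_Re_step h1)).
  rewrite exprS; have hp : 0 < (2%:R : R) ^+ k by rewrite exprn_gt0.
  rewrite invrM ?unitfE ?gt_eqF //.
  move: h2; set q := (2%:R : R) ^+ k; set u := 1 - _; set v := q^-1.
  lra.
by rewrite expnS exprM sqr_sqrtc.
Qed.

Lemma sqrt_half (s t : R) : 0 <= s -> s ^+ 2 <= 1 + t -> 0 <= t -> s <= 1 + t / 2%:R.
Proof. move=> *; nra. Qed.

Lemma near1 (w d : R) : 0 < w -> w <= 1 + d -> w^-1 <= 1 + d -> 0 <= d -> `|w - 1| <= d.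
Proof.
move=> w0 h1 h2 d0; rewrite ler_norml; apply/andP; split; last by lra.
have : w * w^-1 <= w * (1 + d) by rewrite ler_pM2l.
rewrite mulfV ?lt0r_neq0 //.
nra.
Qed.

Lemma iter_sqrtr k (r : R) : 0 < r -> r <= 2%:R -> r^-1 <= 2%:R ->
  [/\ 0 < iter k (@Num.sqrt R) r, iter k (@Num.sqrt R) r <= 1 + (2%:R ^+ k)^-1,
      (iter k (@Num.sqrt R) r)^-1 <= 1 + (2%:R ^+ k)^-1
    & (iter k (@Num.sqrt R) r) ^+ (2 ^ k) = r].
Proof.
move=> r0 r1 r2; elim: k => [|k [h0 h1 h2 h3]].
  by rewrite /= expr0 invr1 expr1; split => //; lra.
have hp : 0 < (2%:R : R) ^+ k by rewrite exprn_gt0.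
have hq : 0 <= (2%:R ^+ k)^-1 :> R by rewrite invr_ge0 ltW.
have E : (2%:R ^+ k.+1)^-1 = (2%:R ^+ k)^-1 / 2%:R :> R.
  by rewrite exprS invrM ?unitfE ?gt_eqF // mulrC.
rewrite iterS E; set w := iter k _ r in h0 h1 h2 h3 *.
split.
- by rewrite sqrtr_gt0.
- apply: sqrt_half; [exact: sqrtr_ge0 | by rewrite sqr_sqrtr // ltW | exact: hq].
- apply: sqrt_half; [by rewrite invr_ge0 sqrtr_ge0 | | exact: hq].
  by rewrite exprVn sqr_sqrtr // ltW.
by rewrite expnS exprM sqr_sqrtr // ltW.
Qed.

Lemma pow2_small (d : R) : 0 < d -> exists k : nat, (2%:R ^+ k)^-1 <= d.
Proof.
move=> d0; have [k hk] : exists k : nat, d^-1 <= k%:R.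
  by exists (Num.bound d^-1); apply/ltW/archi_boundP; rewrite invr_ge0 ltW.
exists k; rewrite -[leRHS]invrK lef_pV2 ?posrE ?exprn_gt0 ?invr_gt0 //.
apply: (le_trans hk); rewrite -natrX ler_nat.
by apply: ltnW; rewrite ltn_expl.
Qed.

End Scalars.


Section Mx.
Local Open Scope sesquilinear_scope.
Variable R : realType.
Local Notation nc := (@Normc.normc R).
Local Notation RC := (real_complex R).
Variable n : nat.

Definition Pm (Q : 'M[R[i]]_n) (a : 'rV[R[i]]_n) := invmx Q *m diag_mx a *m Q.

Lemma PmM (Q : 'M[R[i]]_n) (a b : 'rV[R[i]]_n) : Q \in unitmx ->
  Pm Q a *m Pm Q b = Pm Q (\row_j (a 0 j * b 0 j)).
Proof.
move=> hQ; rewrite /Pm !mulmxA (mulmxK hQ) -(mulmxA (invmx Q)) mulmx_diag.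
by [].
Qed.

Lemma Pm_unit (Q : 'M[R[i]]_n) (a : 'rV[R[i]]_n) : Q \in unitmx -> (forall k, a 0 k != 0) -> Pm Q a \in unitmx.
Proof.
move=> hQ ha; rewrite /Pm !unitmx_mul unitmx_inv hQ andbT /= unitmxE det_diag.
by rewrite unitfE; apply/prodf_neq0 => k _; exact: ha.
Qed.

Lemma Pm1 (Q : 'M[R[i]]_n) : Q \in unitmx -> Pm Q (\row_j 1) = 1%:M.
Proof.
move=> hQ; rewrite /Pm; have -> : diag_mx (\row_j (1 : R[i])) = (1%:M : 'M[R[i]]_n).
  by apply/matrixP => i j; rewrite !mxE.
by rewrite mulmx1 mulVmx.
Qed.

Lemma nc_sum (I : Type) (r : seq I) (P : pred I) (F : I -> R[i]) :
  nc (\sum_(i <- r | P i) F i) <= \sum_(i <- r | P i) nc (F i).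
Proof.
apply: (big_ind2 (fun x y => nc x <= y)).
- by rewrite /= expr0n /= addr0 sqrtr0.
- by move=> x1 y1 x2 y2 h1 h2; apply: le_trans (le_normcD _ _) (lerD h1 h2).
- by [].
Qed.

Lemma nc_conj (z : R[i]) : nc (z^*) = nc z.
Proof. by apply: complexI; rewrite -!normC_nc norm_conjC. Qed.

Lemma nc_opp (z : R[i]) : nc (- z) = nc z.
Proof. by case: z => a b /=; rewrite !sqrrN. Qed.

Lemma unitary_entry (Q : 'M[R[i]]_n) i j : Q \is unitarymx -> nc (Q i j) <= 1.
Proof.
move=> /unitarymxP /matrixP /(_ i i); rewrite !mxE eqxx /= => hs.
have hs' : \sum_k nc (Q i k) ^+ 2 = 1.
  apply: complexI; rewrite rmorph_sum rmorph1 /=; apply: etrans hs; symmetry; apply: eq_bigr => k _.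
  by rewrite !mxE rmorphXn /= -normC_nc normCK.
have : nc (Q i j) ^+ 2 <= 1.
  rewrite -hs' (bigD1 j) //= lerDl; apply: sumr_ge0 => k _; exact: sqr_ge0.
have := nc_ge0 (Q i j); nra.
Qed.


Lemma Pm_entry (Q : 'M[R[i]]_n) (a : 'rV[R[i]]_n) (i j : 'I_n) : Pm Q a i j = \sum_k invmx Q i k * a 0 k * Q k j.
Proof. by rewrite /Pm !mxE; apply: eq_bigr => k _; rewrite mul_mx_diag !mxE. Qed.

Lemma near_id (f : 'M[R[i]]_n -> R) (M0 e eps : R) Q (w : 'rV[R[i]]_n) :
  (forall y, y \in unitmx -> (forall i j, nc (1%:M i j - y i j) < e) -> f y <= M0) ->
  Q \is unitarymx -> (forall k, w 0 k != 0) -> 0 <= eps ->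
  (forall k, nc (w 0 k - 1) <= eps) -> n%:R * eps < e ->
  f (Pm Q w) <= M0.
Proof.
move=> HN hQ hw e0 hk hne; have hQu := unitarymx_unit hQ.
apply: HN; first exact: Pm_unit.
move=> i j.
have -> : 1%:M i j - Pm Q w i j = \sum_k invmx Q i k * (1 - w 0 k) * Q k j.
  rewrite Pm_entry -(mulVmx hQu) mxE -sumrB; apply: eq_bigr => k _; ring.
apply: le_lt_trans (nc_sum _ _ _) _.
apply: le_lt_trans hne.
have -> : n%:R * eps = \sum_(k < n) eps by rewrite sumr_const card_ord mulr_natl.
apply: ler_sum => k _; rewrite !ncM.
have h1 : nc (invmx Q i k) <= 1.
  rewrite invmx_unitary // !mxE nc_conj; exact: unitary_entry.
have h2 : nc (Q k j) <= 1 by exact: unitary_entry.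
have h3 : nc (1 - w 0 k) <= eps by rewrite -nc_opp opprB.
rewrite -[eps]mul1r -[1 * eps]mulr1; apply: ler_pM; rewrite ?nc_ge0 //.
- by rewrite mulr_ge0 ?nc_ge0.
- by apply: ler_pM; rewrite ?nc_ge0.
Qed.

Lemma near_id_pow (f : 'M[R[i]]_n -> R) (M0 e eps : R) Q (w d : 'rV[R[i]]_n) m :
  (forall x, x \in unitmx -> 1 <= f x) ->
  (forall x y, x \in unitmx -> y \in unitmx -> f (x *m y) <= f x * f y) ->
  (forall y, y \in unitmx -> (forall i j, nc (1%:M i j - y i j) < e) -> f y <= M0) ->
  Q \is unitarymx -> (forall k, w 0 k != 0) -> 0 <= eps ->
  (forall k, nc (w 0 k - 1) <= eps) -> n%:R * eps < e ->
  (forall k, w 0 k ^+ m = d 0 k) ->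
  f (Pm Q d) <= M0 ^+ m.+1.
Proof.
move=> f1 fM HN hQ hw e0 hk hne.
have hQu := unitarymx_unit hQ.
have hb := near_id HN hQ hw e0 hk hne.
elim: m d => [|m IH] d hd.
  have -> : d = \row_j 1 by apply/rowP => k; rewrite mxE -hd expr0.
  rewrite expr1 Pm1 //; apply: HN; first exact: unitmx1.
  move=> i j; rewrite subrr; apply: le_lt_trans hne.
  rewrite /= expr0n /= addr0 sqrtr0; exact: mulr_ge0.
have -> : d = \row_j ((\row_k (w 0 k ^+ m)) 0 j * w 0 j).
  by apply/rowP => k; rewrite !mxE -hd exprSr.
rewrite -PmM //.
have hu1 : Pm Q (\row_k (w 0 k ^+ m)) \in unitmx.
  by apply: Pm_unit => // k; rewrite mxE expf_neq0.
have hu2 : Pm Q w \in unitmx by exact: Pm_unit.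
apply: le_trans (fM _ _ hu1 hu2) _.
rewrite exprSr; apply: ler_pM => //.
- exact: le_trans ler01 (f1 _ hu1).
- exact: le_trans ler01 (f1 _ hu2).
- by apply: IH => k; rewrite mxE.
Qed.

End Mx.


Section Mx2.
Local Open Scope sesquilinear_scope.
Variable R : realType.
Local Notation nc := (@Normc.normc R).
Local Notation RC := (real_complex R).
Variable n : nat.

Lemma Pm_adj (Q : 'M[R[i]]_n) (a : 'rV[R[i]]_n) : Q \is unitarymx ->
  (Pm Q a)^t* = Pm Q (map_mx Num.conj a).
Proof.
move=> hQ; rewrite /Pm invmx_unitary // !trmx_mul !map_mxM trmxCK.
by rewrite tr_diag_mx map_diag_mx mulmxA.
Qed.

Lemma Pm_inj (Q : 'M[R[i]]_n) (a b : 'rV[R[i]]_n) : Q \in unitmx ->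
  Pm Q a = Pm Q b -> a = b.
Proof.
move=> hQ /(congr1 (fun X => Q *m X *m invmx Q)).
rewrite /Pm !mulmxA (mulmxV hQ) !mul1mx !(mulmxK hQ) => h.
apply/rowP => k; have := congr1 (fun X : 'M[R[i]]_n => X k k) h; rewrite !mxE eqxx.
by rewrite !mulr1n.
Qed.

Lemma unitary_normal (W : 'M[R[i]]_n) : W \is unitarymx -> W \is normalmx.
Proof.
move=> hW; apply/normalmxP; rewrite (unitarymxP hW) -invmx_unitary //.
by rewrite mulVmx // unitarymx_unit.
Qed.

Lemma nc0 : nc 0 = 0.
Proof. by rewrite /= expr0n /= addr0 sqrtr0. Qed.

Lemma unitary_bound (f : 'M[R[i]]_n -> R) (M0 e eps : R) (K : nat) :
  (forall x, x \in unitmx -> 1 <= f x) ->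
  (forall x y, x \in unitmx -> y \in unitmx -> f (x *m y) <= f x * f y) ->
  (forall y, y \in unitmx -> (forall i j, nc (1%:M i j - y i j) < e) -> f y <= M0) ->
  0 <= eps -> n%:R * eps < e -> 4%:R / 2%:R ^+ K <= eps ^+ 2 ->
  forall W, W \is unitarymx -> f W <= M0 ^+ (2 ^ K).+1.
Proof.
move=> f1 fM HN e0 hne hK W hW.
have hWn := unitary_normal hW.
have hWe := orthomx_spectralP hWn.
set Q := spectralmx W in hWe; set d := spectral_diag W in hWe.
have hQ : Q \is unitarymx by exact: spectral_unitarymx.
have hQu := unitarymx_unit hQ.
have hd : forall k, nc (d 0 k) = 1.
  move=> k; have := unitarymxP hW; rewrite hWe -/(Pm Q d) Pm_adj // PmM //.
  rewrite -(Pm1 hQu) => /(Pm_inj hQu) /rowP /(_ k); rewrite !mxE -normCK.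
  rewrite normC_nc -rmorphXn /= -(rmorph1 RC) => /complexI h.
  have := nc_ge0 (d 0 k); nra.
set w := \row_k iter K (@sqrtc R) (d 0 k).
have hw : forall k, [/\ nc (w 0 k) = 1, 1 - complex.Re (w 0 k) <= 2%:R / 2%:R ^+ K
    & (w 0 k) ^+ (2 ^ K) = d 0 k].
  by move=> k; rewrite mxE; apply: iter_sqrtc.
rewrite hWe -/(Pm Q d).
apply: (near_id_pow (w := w) f1 fM HN hQ _ e0 _ hne) => k.
- by have [h1 _ _] := hw k; apply/eqP => h0; move: h1; rewrite h0 nc0; lra.
- have [h1 h2 _] := hw k; have h3 := nc_sub1_sq h1.
  have := nc_ge0 (w 0 k - 1); move: h3 h2 hK.
  set u := nc _; set v := complex.Re _; set q := (2%:R ^+ K)^-1 => h3 h2 hK hu.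
  have h5 : u ^+ 2 <= eps ^+ 2 by lra.
  by rewrite -(ler_pXn2r (n:=2)) ?nnegrE.
- by have [_ _ h3] := hw k.
Qed.

Lemma pos_base (f : 'M[R[i]]_n -> R) (M0 e eps : R) (K : nat) :
  (forall x, x \in unitmx -> 1 <= f x) ->
  (forall x y, x \in unitmx -> y \in unitmx -> f (x *m y) <= f x * f y) ->
  (forall y, y \in unitmx -> (forall i j, nc (1%:M i j - y i j) < e) -> f y <= M0) ->
  0 <= eps -> n%:R * eps < e -> (2%:R ^+ K)^-1 <= eps ->
  forall (Q : 'M[R[i]]_n) (r : 'rV[R]_n), Q \is unitarymx ->
  (forall k, [/\ 0 < r 0 k, r 0 k <= 2%:R & (r 0 k)^-1 <= 2%:R]) ->
  f (Pm Q (map_mx RC r)) <= M0 ^+ (2 ^ K).+1.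
Proof.
move=> f1 fM HN e0 hne hK Q r hQ hr.
set w := \row_k RC (iter K (@Num.sqrt R) (r 0 k)).
have hw : forall k, [/\ 0 < iter K (@Num.sqrt R) (r 0 k),
   iter K (@Num.sqrt R) (r 0 k) <= 1 + (2%:R ^+ K)^-1,
   (iter K (@Num.sqrt R) (r 0 k))^-1 <= 1 + (2%:R ^+ K)^-1
   & (iter K (@Num.sqrt R) (r 0 k)) ^+ (2 ^ K) = r 0 k].
  by move=> k; have [h1 h2 h3] := hr k; apply: iter_sqrtr.
have hq : 0 <= (2%:R ^+ K)^-1 :> R by rewrite invr_ge0 exprn_ge0.
apply: (near_id_pow (w := w) f1 fM HN hQ _ e0 _ hne) => k; rewrite !mxE.
- by have [h1 _ _ _] := hw k; rewrite -(rmorph0 RC) (inj_eq (@complexI R)) gt_eqF.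
- have [h1 h2 h3 _] := hw k.
  rewrite -(rmorph1 RC) -rmorphB nc_real; apply: le_trans hK.
  exact: near1.
- by have [_ _ _ h4] := hw k; rewrite -rmorphXn h4.
Qed.

End Mx2.


Section Mx3.
Variable R : realType.
Local Notation nc := (@Normc.normc R).
Local Notation RC := (real_complex R).
Variable n : nat.

Lemma doubling (f : 'M[R[i]]_n -> R) (B : R) :
  (forall x, x \in unitmx -> 1 <= f x) ->
  (forall x y, x \in unitmx -> y \in unitmx -> f (x *m y) <= f x * f y) ->
  (forall (Q : 'M[R[i]]_n) (r : 'rV[R]_n), Q \is unitarymx ->
    (forall k, [/\ 0 < r 0 k, r 0 k <= 2%:R & (r 0 k)^-1 <= 2%:R]) ->
    f (Pm Q (map_mx RC r)) <= B) ->
  forall j (Q : 'M[R[i]]_n) (r : 'rV[R]_n), Q \is unitarymx ->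
    (forall k, [/\ 0 < r 0 k, r 0 k <= 2%:R ^+ (2 ^ j) & (r 0 k)^-1 <= 2%:R ^+ (2 ^ j)]) ->
    f (Pm Q (map_mx RC r)) <= B ^+ (2 ^ j).
Proof.
move=> f1 fM hB; elim => [|j IH] Q r hQ hr.
  by rewrite expn0 !expr1; apply: hB => // k; have := hr k; rewrite expn0 expr1.
have hQu := unitarymx_unit hQ.
set v := \row_k Num.sqrt (r 0 k).
have hv : forall k, 0 < v 0 k by move=> k; have [h _ _] := hr k; rewrite mxE sqrtr_gt0.
have -> : map_mx RC r = \row_k ((map_mx RC v) 0 k * (map_mx RC v) 0 k).
  apply/rowP => k; rewrite !mxE -rmorphM /= -expr2 sqr_sqrtr //.
  by have [h _ _] := hr k; exact: ltW.
rewrite -PmM //.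
have hu : Pm Q (map_mx RC v) \in unitmx.
  apply: Pm_unit => // k; rewrite mxE -(rmorph0 RC) (inj_eq (@complexI R)).
  exact: lt0r_neq0.
apply: le_trans (fM _ _ hu hu) _.
have hT : 0 <= 2%:R ^+ (2 ^ j) :> R by rewrite exprn_ge0.
have E : 2%:R ^+ (2 ^ j.+1) = (2%:R ^+ (2 ^ j)) ^+ 2 :> R.
  by rewrite expnS mulnC exprM.
have Hv : f (Pm Q (map_mx RC v)) <= B ^+ (2 ^ j).
  apply: IH => // k; have [h1 h2 h3] := hr k; rewrite mxE; split.
  - by rewrite sqrtr_gt0.
  - have : Num.sqrt (r 0 k) <= Num.sqrt ((2%:R ^+ (2 ^ j)) ^+ 2).
      by apply: ler_wsqrtr; rewrite -E.
    by rewrite sqrtr_sqr ger0_norm.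
  - have : Num.sqrt ((r 0 k)^-1) <= Num.sqrt ((2%:R ^+ (2 ^ j)) ^+ 2).
      by apply: ler_wsqrtr; rewrite -E.
    by rewrite sqrtr_sqr ger0_norm // sqrtrV // ltW.
rewrite expnS mulnC exprM expr2; apply: ler_pM => //.
- exact: le_trans ler01 (f1 _ hu).
- exact: le_trans ler01 (f1 _ hu).
Qed.

Lemma find_j (t : R) : exists j : nat,
  t <= 2%:R ^+ (2 ^ j) /\ 2%:R ^+ (2 ^ j) <= Num.max 2%:R (t ^+ 2).
Proof.
have [j0 hj0] : exists j0 : nat, t <= 2%:R ^+ (2 ^ j0).
  exists (Num.bound `|t|); apply: le_trans (ler_norm t) _.
  apply: ltW; apply: lt_le_trans (archi_boundP (normr_ge0 t)) _.
  rewrite -natrX ler_nat; set N := Num.bound _.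
  apply: leq_trans (ltnW (ltn_expl N (ltnSn 1))) _.
  rewrite leq_exp2l //; exact: (ltnW (ltn_expl N (ltnSn 1))).
have Pj0 : (fun j => t <= 2%:R ^+ (2 ^ j)) j0 by [].
have [j Pj minj] := ex_minnP (ex_intro (fun j => t <= 2%:R ^+ (2 ^ j)) j0 hj0).
exists j; split => //.
case: j Pj minj => [|j] Pj minj.
  by rewrite expn0 expr1 le_max lexx.
have nPj : 2%:R ^+ (2 ^ j) < t.
  rewrite ltNge; apply/negP => h; have := minj j h; by rewrite ltnn.
have E : 2%:R ^+ (2 ^ j.+1) = (2%:R ^+ (2 ^ j)) ^+ 2 :> R.
  by rewrite expnS mulnC exprM.
rewrite E le_max; apply/orP; right.
have h0 : 0 <= 2%:R ^+ (2 ^ j) :> R by rewrite exprn_ge0.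
move: nPj h0; set a := 2%:R ^+ _ => h1 h2; nra.
Qed.

End Mx3.


Section Mx4.
Local Open Scope sesquilinear_scope.
Variable R : realType.
Local Notation nc := (@Normc.normc R).
Local Notation RC := (real_complex R).
Variable n : nat.

Lemma conj_RC (a : R) : (RC a)^* = RC a.
Proof. by apply: conj_Creal; rewrite complex_real. Qed.

Lemma gram_diag (X : 'M[R[i]]_n) k :
  (X *m X^t*) k k = RC (\sum_j nc (X k j) ^+ 2).
Proof.
rewrite !mxE rmorph_sum; apply: eq_bigr => j _.
by rewrite !mxE -normCK normC_nc rmorphXn.
Qed.

Lemma entry_bound (X Q : 'M[R[i]]_n) (A : R) : Q \is unitarymx ->
  (forall i j, nc (X i j) <= A) -> forall k j, nc ((Q *m X) k j) <= n%:R * A.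
Proof.
move=> hQ hX k j; rewrite mxE; apply: le_trans (nc_sum _ _ _) _.
have -> : n%:R * A = \sum_(l < n) A by rewrite sumr_const card_ord mulr_natl.
apply: ler_sum => l _; rewrite ncM -[A]mul1r; apply: ler_pM; rewrite ?nc_ge0 //.
exact: unitary_entry.
Qed.

Lemma gram_bound (X Q : 'M[R[i]]_n) (A : R) : Q \is unitarymx ->
  (forall i j, nc (X i j) <= A) ->
  forall k, \sum_j nc ((Q *m X) k j) ^+ 2 <= n%:R * (n%:R * A) ^+ 2.
Proof.
move=> hQ hX k.
have -> : n%:R * (n%:R * A) ^+ 2 = \sum_(l < n) (n%:R * A) ^+ 2.
  by rewrite sumr_const card_ord mulr_natl.
apply: ler_sum => j _; have h := entry_bound hQ hX k j.
have := nc_ge0 ((Q *m X) k j); move: h; set u := nc _; set v := _ * A => h1 h2.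
by rewrite ler_pXn2r // ?nnegrE //; apply: le_trans h1.
Qed.


Lemma polar (x : 'M[R[i]]_n) (A B : R) : x \in unitmx ->
  (forall i j, nc (x i j) <= A) -> (forall i j, nc (invmx x i j) <= B) ->
  exists (Q W : 'M[R[i]]_n) (r : 'rV[R]_n),
    [/\ Q \is unitarymx, W \is unitarymx, x = Pm Q (map_mx RC r) *m W &
      forall k, [/\ 0 < r 0 k, r 0 k ^+ 2 <= n%:R * (n%:R * A) ^+ 2
                  & (r 0 k ^+ 2)^-1 <= n%:R * (n%:R * B) ^+ 2]].
Proof.
move=> hx hA hB.
set y := invmx x.
have hxy : x *m y = 1%:M by exact: mulmxV.
have hyx : y *m x = 1%:M by exact: mulVmx.
set H := x *m x^t*.
have HH : H^t* = H by rewrite /H trmx_mul map_mxM trmxCK.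
have Hn : H \is normalmx by apply/normalmxP; rewrite HH.
have He := orthomx_spectralP Hn.
set Q := spectralmx H in He; set lam := spectral_diag H in He.
have hQ : Q \is unitarymx by exact: spectral_unitarymx.
have hQu := unitarymx_unit hQ.
have hQQ : Q *m Q^t* = 1%:M by exact/unitarymxP.
have hQiQ : invmx Q = Q^t* by exact: invmx_unitary.
have hD : diag_mx lam = Q *m H *m Q^t*.
  by rewrite He -hQiQ !mulmxA (mulmxV hQu) mul1mx (mulmxK hQu).
set rho := fun k => \sum_j nc ((Q *m x) k j) ^+ 2.
set sig := fun k => \sum_j nc ((Q *m y^t*) k j) ^+ 2.
have hlam : forall k, lam 0 k = RC (rho k).
  move=> k; rewrite /rho -gram_diag.
  have -> : lam 0 k = diag_mx lam k k by rewrite mxE eqxx mulr1n.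
  by rewrite hD /H trmx_mul map_mxM !mulmxA.
have hxy' : x^t* *m y^t* = 1%:M.
  by rewrite -map_mxM -trmx_mul hyx trmx1 map_mx1.
have hZ : diag_mx lam *m ((Q *m y^t*) *m (Q *m y^t*)^t*) = 1%:M.
  rewrite hD /H trmx_mul map_mxM trmxCK !mulmxA.
  rewrite (mulmxKtV _ hQ) //.
  rewrite -[Q *m x *m x^t* *m y^t*]mulmxA hxy' mulmx1.
  by rewrite -[Q *m x *m y]mulmxA hxy mulmx1.
have hrs : forall k, rho k * sig k = 1.
  move=> k; have := congr1 (fun X : 'M[R[i]]_n => X k k) hZ.
  rewrite mul_diag_mx mxE gram_diag hlam mxE eqxx /= -rmorphM.
  by rewrite -(rmorph1 RC) => /(@complexI R).
have hrho0 : forall k, 0 <= rho k.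
  by move=> k; apply: sumr_ge0 => j _; exact: sqr_ge0.
have hsig0 : forall k, 0 <= sig k.
  by move=> k; apply: sumr_ge0 => j _; exact: sqr_ge0.
have hrho : forall k, 0 < rho k.
  move=> k; rewrite lt0r hrho0 andbT; apply/eqP => h.
  by have := hrs k; rewrite h mul0r => /eqP; rewrite eq_sym oner_eq0.
have hsig : forall k, (rho k)^-1 = sig k.
  by move=> k; apply: (mulIf (lt0r_neq0 (hrho k))); rewrite mulVf ?lt0r_neq0 // mulrC hrs.
pose r := \row_k Num.sqrt (rho k).
have hr2 : forall k, r 0 k ^+ 2 = rho k by move=> k; rewrite mxE sqr_sqrtr.
have hr0 : forall k, 0 < r 0 k by move=> k; rewrite mxE sqrtr_gt0.
pose Pr := Pm Q (map_mx RC r).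
pose Pi := Pm Q (\row_k RC ((r 0 k)^-1)).
have hPP : Pr *m Pi = 1%:M.
  rewrite /Pr /Pi (PmM _ _ hQu) -(Pm1 hQu); congr Pm; apply/rowP => k.
  rewrite !mxE -rmorphM mulfV ?rmorph1 //; apply: lt0r_neq0; rewrite sqrtr_gt0; exact: hrho.
have [hPru hPiu] := mulmx1_unit hPP.
have hinv : invmx Pr = Pi.
  by rewrite -[Pi](mulKmx hPru) hPP mulmx1.
have hPiadj : Pi^t* = Pi.
  rewrite /Pi (Pm_adj _ hQ); congr Pm; apply/rowP => k; rewrite !mxE; exact: conj_RC.
have hH : H = Pm Q (\row_k RC (rho k)).
  rewrite He; congr Pm; apply/rowP => k; by rewrite mxE hlam.
exists Q, (Pi *m x), r; split.
- exact: hQ.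
- apply/unitarymxP; rewrite trmx_mul map_mxM hPiadj mulmxA -(mulmxA Pi) -/H hH.
  rewrite /Pi !(PmM _ _ hQu) -(Pm1 hQu); congr Pm; apply/rowP => k; rewrite !mxE.
  rewrite -!rmorphM -(rmorph1 RC); congr RC; rewrite -hr2.
  have := lt0r_neq0 (hr0 k); set a := r 0 k => ha.
  by rewrite sqrtr_sqr ger0_norm ?(ltW (hr0 k)) // expr2 mulrA mulVf ?mul1r ?mulfV.
- by rewrite mulmxA hPP mul1mx.
- move=> k; split; first exact: hr0.
    rewrite hr2; exact: gram_bound.
  rewrite hr2 hsig; apply: gram_bound => // i j; rewrite !mxE nc_conj; exact: hB.
Qed.

End Mx4.


Section Fin.
Variable R : realType.
Local Notation nc := (@Normc.normc R).
Local Notation RC := (real_complex R).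
Variable n : nat.

Lemma delta_sandwich (x : 'M[R[i]]_n) i j :
  delta_mx i i *m x *m delta_mx j j = x i j *: delta_mx i j.
Proof.
apply/matrixP => a b; rewrite !mxE (bigD1 j) //= big1 ?addr0; last first.
  by move=> l hl; rewrite [delta_mx j j l b]mxE (negbTE hl) /= mulr0.
rewrite [delta_mx j j j b]mxE eqxx /= mxE (bigD1 i) //= big1 ?addr0; last first.
  by move=> l hl; rewrite [delta_mx i i a l]mxE (negbTE hl) andbF /= mul0r.
rewrite !mxE eqxx andbT.
by case: (a == i); case: (b == j); rewrite /= ?mul1r ?mulr1 ?mul0r ?mulr0.
Qed.

Lemma delta_neq0 (i j : 'I_n) : delta_mx i j != 0 :> 'M[R[i]]_n.
Proof.
apply/eqP => /matrixP /(_ i j); rewrite !mxE !eqxx /= => /eqP.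
by rewrite oner_eq0.
Qed.

Lemma entry_nm (nm : 'M[R[i]]_n -> R) : submult_mxnorm nm ->
  exists K1 : R, 0 <= K1 /\ forall (x : 'M[R[i]]_n) (i j : 'I_n), nc (x i j) <= K1 * nm x.
Proof.
move=> [nm0 nmz nmZ nmD nmM].
have nmpos : forall i j : 'I_n, 0 < nm (delta_mx i j).
  move=> i j; rewrite lt0r nm0 andbT; apply/eqP => /nmz h.
  by have := delta_neq0 i j; rewrite h eqxx.
pose g i j := nm (delta_mx i i) * nm (delta_mx j j) / nm (delta_mx i j).
have g0 : forall i j, 0 <= g i j.
  by move=> i j; rewrite /g !mulr_ge0 ?invr_ge0 ?nm0.
exists (\sum_i \sum_j g i j); split.
  by apply: sumr_ge0 => i _; apply: sumr_ge0.
move=> x i j.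
have hg : g i j <= \sum_i \sum_j g i j.
  rewrite (bigD1 i) //= (bigD1 j) //= -addrA lerDl addr_ge0 //.
    by apply: sumr_ge0.
  by apply: sumr_ge0 => k _; apply: sumr_ge0.
have h1 : nc (x i j) * nm (delta_mx i j) <= nm (delta_mx i i) * nm x * nm (delta_mx j j).
  rewrite -nmZ -delta_sandwich.
  apply: le_trans (nmM _ _) _; rewrite ler_pM2r ?nmpos //; exact: nmM.
have h2 : nc (x i j) <= g i j * nm x.
  have -> : g i j * nm x = nm (delta_mx i i) * nm x * nm (delta_mx j j) / nm (delta_mx i j).
    by rewrite /g; ring.
  by rewrite ler_pdivlMr ?nmpos.
apply: le_trans h2 _; apply: ler_wpM2r; [exact: nm0 | exact: hg].
Qed.

End Fin.


Lemma near_ball (R : realType) (n : nat) (P : 'M[R[i]]_n -> Prop) :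
  (\forall y \near (1%:M : 'M[R[i]]_n), P y) ->
  exists e : R, 0 < e /\ forall y : 'M[R[i]]_n,
    (forall i j, Normc.normc (1%:M i j - y i j) < e) -> P y.
Proof.
move=> /nbhs_ballP [e e0 H].
exists (complex.Re e).
have e0' : 0 < complex.Re e by move: e0; rewrite /= ltcE => /andP[].
have eE : e = real_complex R (complex.Re e).
  by move: e0; case: (e) => a b; rewrite /= ltcE /= => /andP[/eqP -> _].
split => // y Hy; apply: H; split => // i j.
rewrite /ball /= eE.
change (real_complex R (Normc.normc (1%:M i j - y i j)) < real_complex R (complex.Re e)).
by rewrite ltcR.
Qed.

Lemma pow2_big (R : realType) (B : R) : exists N : nat, B <= 2%:R ^+ N.
Proof.
exists (Num.bound `|B|); apply: le_trans (ler_norm B) _.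
apply: ltW; apply: lt_le_trans (archi_boundP (normr_ge0 B)) _.
rewrite -natrX ler_nat; exact: (ltnW (ltn_expl _ (ltnSn 1))).
Qed.

Lemma nm1_ge1 (R : realType) (n : nat) (nm : 'M[R[i]]_n -> R) : submult_mxnorm nm ->
  (0 < n)%N -> 1 <= nm 1%:M.
Proof.
move=> [nm0 nmz nmZ nmD nmM] n0.
have h : nm (1%:M : 'M[R[i]]_n) <= nm 1%:M * nm 1%:M by rewrite -{1}(mulmx1 1%:M); exact: nmM.
have h1 : 0 < nm (1%:M : 'M[R[i]]_n).
  rewrite lt0r nm0 andbT; apply/eqP => /nmz /matrixP /(_ (Ordinal n0) (Ordinal n0)).
  by rewrite !mxE eqxx /= => /eqP; rewrite oner_eq0.
nra.
Qed.

Lemma bound_help (R : realType) (a K m s r : R) : 0 <= a -> 0 <= K -> 0 <= m -> m <= s ->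
  0 <= r -> r ^+ 2 <= a * (a * (K * m)) ^+ 2 -> r <= (a ^+ 3 * K ^+ 2 + 1) * s.
Proof.
move=> a0 K0 m0 ms r0 hr.
set c := a ^+ 3 * K ^+ 2 + 1.
have c1 : 1 <= c by rewrite /c lerDr mulr_ge0 ?exprn_ge0.
have hc : a ^+ 3 * K ^+ 2 <= c ^+ 2.
  by apply: le_trans (_ : c <= _); [rewrite /c lerDl | rewrite expr2 ler_peMl // (le_trans ler01)].
have hm : m ^+ 2 <= s ^+ 2 by rewrite ler_pXn2r ?nnegrE // (le_trans m0).
have h1 : a * (a * (K * m)) ^+ 2 = (a ^+ 3 * K ^+ 2) * m ^+ 2 by ring.
have h2 : r ^+ 2 <= (c * s) ^+ 2.
  apply: (le_trans hr); rewrite h1 exprMn; apply: ler_pM; rewrite ?exprn_ge0 ?mulr_ge0 //.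
rewrite -(ler_pXn2r (n := 2)) ?nnegrE // mulr_ge0 // ?(le_trans ler01 c1) //.
exact: le_trans m0 ms.
Qed.

End Aux.
Import Aux.

Theorem mainTheorem5 (R : realType) (n : nat) (nm : 'M[R[i]]_n -> R) :
  submult_mxnorm nm ->
  forall f : 'M[R[i]]_n -> R, semicharacter_GL f ->
  exists (C : R) (N : nat), 1 <= C /\
    (forall x : 'M[R[i]]_n, x \in unitmx -> f x <= rNC nm C N x).
Proof.
move=> hnm f [f1 fM floc].
have [n0|npos] := posnP n.
  exists (Num.max 1 (f 0)), 0%N; split; first by rewrite le_max lexx.
  move=> x _; rewrite /rNC expr0 mulr1.
  have -> : x = 0 by subst n; apply/matrixP => -[].
  by rewrite le_max lexx orbT.
have [M0 hM0] := floc 1%:M (unitmx1 _ _).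
have [e [e0 HN']] := near_ball hM0.
have HN : forall y, y \in unitmx ->
    (forall i j, Normc.normc (1%:M i j - y i j) < e) -> f y <= M0.
  by move=> y hy hb; exact: HN' y hb hy.
have M01 : 1 <= M0.
  apply: le_trans (f1 _ (unitmx1 _ _)) (HN _ (unitmx1 _ _) _) => i j.
  by rewrite subrr nc0.
pose eps := e / (n%:R + 1).
have n10 : 0 < n%:R + 1 :> R by rewrite ltr_wpDl ?ler0n.
have eps0 : 0 < eps by rewrite /eps divr_gt0.
have hne : n%:R * eps < e.
  rewrite /eps mulrA ltr_pdivrMr //; nra.
have [Ku hKu] := pow2_small (d := eps ^+ 2 / 4%:R) ltac:(by rewrite divr_gt0 ?exprn_gt0).
have hK4 : 4%:R / 2%:R ^+ Ku <= eps ^+ 2.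
  move: hKu; set u := (2%:R ^+ Ku)^-1; move=> hKu; lra.
have [Kp hKp] := pow2_small eps0.
pose C1 := M0 ^+ (2 ^ Ku).+1.
have hW := unitary_bound f1 fM HN (ltW eps0) hne hK4.
pose B0 := M0 ^+ (2 ^ Kp).+1.
have hbase := pos_base f1 fM HN (ltW eps0) hne hKp.
have hdbl := doubling f1 fM hbase.
have [K1 [K10 hK1]] := entry_nm hnm.
have [N0 hN0] := pow2_big B0.
pose c := n%:R ^+ 3 * K1 ^+ 2 + 1.
have c1 : 1 <= c by rewrite /c lerDr mulr_ge0 ?exprn_ge0.
have C11 : 1 <= C1 by rewrite /C1 exprn_ege1.
have B01 : 1 <= B0 by rewrite /B0 exprn_ege1.
exists (C1 * (2%:R * c ^+ 2) ^+ N0), (2 * N0)%N; split.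
  rewrite mulr_ege1 // exprn_ege1 //.
  have : 1 <= c ^+ 2 by rewrite expr_ge1 // (le_trans ler01).
  lra.
move=> x hx.
rewrite /rNC; set s := Num.max (nm x) (nm (invmx x)).
have [nm0 _ _ _ nmM] := hnm.
have hs1 : 1 <= s.
  have h1 := nm1_ge1 hnm npos.
  have h2 : nm (1%:M : 'M[R[i]]_n) <= nm x * nm (invmx x) by rewrite -(mulmxV hx); exact: nmM.
  have h3 : nm x <= s by rewrite le_max lexx.
  have h4 : nm (invmx x) <= s by rewrite le_max lexx orbT.
  have := nm0 x; have := nm0 (invmx x); nra.
have [Q [W [r [hQ hWu hxe hr]]]] := polar hx (hK1 x) (hK1 (invmx x)).
pose t := c * s.
have t1 : 1 <= t by rewrite /t mulr_ege1.
have hrb : forall k, [/\ 0 < r 0 k, r 0 k <= t & (r 0 k)^-1 <= t].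
  move=> k; have [h1 h2 h3] := hr k; split => //.
    apply: (bound_help (ler0n _ _) K10 (nm0 x)); rewrite ?le_max ?lexx //.
    exact: ltW.
  apply: (bound_help (ler0n _ _) K10 (nm0 (invmx x))); rewrite ?le_max ?lexx ?orbT //.
    by rewrite invr_ge0 ltW.
  by rewrite exprVn.
have [j [hj1 hj2]] := find_j t.
have hP : f (Pm Q (map_mx (real_complex R) r)) <= B0 ^+ (2 ^ j).
  apply: hdbl => // k; have [h1 h2 h3] := hrb k; split => //.
    exact: le_trans hj1.
  exact: le_trans hj1.
have hQu := unitarymx_unit hQ.
have hPu : Pm Q (map_mx (real_complex R) r) \in unitmx.
  apply: Pm_unit => // k; rewrite mxE -(rmorph0 (real_complex R)) (inj_eq (@complexI R)).
  by have [h _ _] := hrb k; exact: lt0r_neq0.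
have hWu' := unitarymx_unit hWu.
rewrite hxe; apply: le_trans (fM _ _ hPu hWu') _.
have hWb := hW W hWu.
have hT : B0 ^+ (2 ^ j) <= (2%:R * c ^+ 2) ^+ N0 * s ^+ (2 * N0).
  apply: le_trans (_ : (2%:R ^+ N0) ^+ (2 ^ j) <= _).
    by rewrite ler_pXn2r ?nnegrE ?exprn_ge0 ?expn_gt0 // (le_trans ler01).
  rewrite -exprM mulnC exprM.
  have hT0 : 0 <= 2%:R ^+ (2 ^ j) :> R by rewrite exprn_ge0.
  apply: le_trans (_ : (2%:R * t ^+ 2) ^+ N0 <= _).
    apply: lerXn2r; rewrite ?nnegrE //; last first.
      apply: le_trans hj2 _; rewrite ge_max; apply/andP; split.
        have : 1 <= t ^+ 2 by rewrite expr_ge1 // (le_trans ler01).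
        lra.
      have := sqr_ge0 t; lra.
    have := sqr_ge0 t; lra.
  have -> : 2%:R * t ^+ 2 = (2%:R * c ^+ 2) * s ^+ 2 by rewrite /t; ring.
  by rewrite exprMn exprM.
rewrite mulrC -mulrA; apply: ler_pM => //.
- exact: le_trans ler01 (f1 _ hWu').
- exact: le_trans ler01 (f1 _ hPu).
- exact: le_trans hP hT.
Qed.
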